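(* Let $0<\alpha<1$, $\sigma=1-\alpha/2$, $l,T>0$, $N,M\ge1$, $h=l/N$, $x_i=ih$, $\tau=T/M$, $t_j=j\tau$, $t_{j+\sigma}=(j+\sigma)\tau$. Let $k(t)\ge c_1>0$, $q(t)\ge0$ be continuous on $[0,T]$, $f$ continuous on $[0,l]\times[0,T]$, and $u_0$ a function on $[0,l]$. Set $a^{j+1}=k(t_{j+\sigma})$, $d^{j+1}=q(t_{j+\sigma})$, $\varphi_i^{j+1}=f(x_i,t_{j+\sigma})$ ($0\le i\le N$). Let $y$ solve $$\Delta^\alpha_{0t_{j+\sigma}}\mathcal H_hy_i=a^{j+1}y^{(\sigma)}_{\bar xx,i}-d^{j+1}\mathcal H_hy_i^{(\sigma)}+\mathcal H_h\varphi_i^{j+1},\quad i=1,\dots,N-1,\ j=0,\dots,M-1,$$ $$y_0^j=y_N^j=0,\qquad y_i^0=u_0(x_i).$$ Then the scheme is unconditionally stable and for every $j=0,\dots,M-1$ $$\|\mathcal H_hy^{j+1}\|_0^2\le\|\mathcal H_hy^0\|_0^2+\frac{l^2T^\alpha\Gamma(1-\alpha)}{c_1}\max_{1\le j\le M}\|\mathcal H_h\varphi^j\|_0^2 .$$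
   Context: $(y,v)=\sum_{i=1}^{N-1}y_iv_ih$, $\|y\|_0^2=(y,y)$; $v_{\bar xx,i}=(v_{i+1}-2v_i+v_{i-1})/h^2$; $\mathcal H_hv_i=v_i+\frac{h^2}{12}v_{\bar xx,i}=\frac{v_{i-1}+10v_i+v_{i+1}}{12}$ for $i=1,\dots,N-1$; $y^{(\sigma)}=\sigma y^{j+1}+(1-\sigma)y^j$. The discrete fractional derivative of a mesh function $w$ is $\Delta^\alpha_{0t_{j+\sigma}}w=\frac{\tau^{1-\alpha}}{\Gamma(2-\alpha)}\sum_{s=0}^{j}c_{j-s}\frac{w^{s+1}-w^s}{\tau}$, with $a_0=\sigma^{1-\alpha}$, $a_m=(m+\sigma)^{1-\alpha}-(m-1+\sigma)^{1-\alpha}$ ($m\ge1$), $b_m=\frac{1}{2-\alpha}[(m+\sigma)^{2-\alpha}-(m-1+\sigma)^{2-\alpha}]-\frac12[(m+\sigma)^{1-\alpha}+(m-1+\sigma)^{1-\alpha}]$ ($m\ge1$); for $j=0$, $c_0=a_0$; for $j\ge1$, $c_0=a_0+b_1$, $c_s=a_s+b_{s+1}-b_s$ ($1\le s\le j-1$), $c_j=a_j-b_j$. *)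

(* Defs.v *)
From Stdlib Require Import Reals.
From Coquelicot Require Import Coquelicot.
Open Scope R_scope.

Definition Gamma (s : R) : R :=
  RInt_gen (fun t => Rpower t (s - 1) * exp (- t))
           (at_right 0) (Rbar_locally p_infty).

Fixpoint rsum (n : nat) (g : nat -> R) : R :=
  match n with O => 0 | S n' => rsum n' g + g n' end.

Fixpoint rmax_upto (n : nat) (g : nat -> R) : R :=
  match n with O => g O | S n' => Rmax (rmax_upto n' g) (g (S n')) end.

Definition norm0_sq (N : nat) (h : R) (v : nat -> R) : R :=
  rsum (N - 1) (fun i => v (S i) * v (S i) * h).

Definition dxx (h : R) (v : nat -> R) (i : nat) : R :=
  (v (S i) - 2 * v i + v (Nat.pred i)) / (h * h).

Definition Hh (v : nat -> R) (i : nat) : R :=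
  (v (Nat.pred i) + 10 * v i + v (S i)) / 12.

Definition a_coef (alpha sigma : R) (m : nat) : R :=
  match m with
  | O => Rpower sigma (1 - alpha)
  | S _ => Rpower (INR m + sigma) (1 - alpha) - Rpower (INR m - 1 + sigma) (1 - alpha)
  end.

Definition b_coef (alpha sigma : R) (m : nat) : R :=
  / (2 - alpha) * (Rpower (INR m + sigma) (2 - alpha) - Rpower (INR m - 1 + sigma) (2 - alpha))
  - / 2 * (Rpower (INR m + sigma) (1 - alpha) + Rpower (INR m - 1 + sigma) (1 - alpha)).

Definition c_coef (alpha sigma : R) (j s : nat) : R :=
  match j with
  | O => a_coef alpha sigma 0
  | S _ =>
    match s with
    | O => a_coef alpha sigma 0 + b_coef alpha sigma 1
    | S _ => if Nat.eqb s j then a_coef alpha sigma j - b_coef alpha sigma j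
             else a_coef alpha sigma s + b_coef alpha sigma (S s) - b_coef alpha sigma s
    end
  end.

Definition frac_diff (alpha sigma tau : R) (w : nat -> R) (j : nat) : R :=
  Rpower tau (1 - alpha) / Gamma (2 - alpha) *
  rsum (S j) (fun s => c_coef alpha sigma j (j - s) * ((w (S s) - w s) / tau)).

(* Main.v *)
Require Import Defs.
From Stdlib Require Import Reals.
From Coquelicot Require Import Coquelicot.
Open Scope R_scope.
From Stdlib Require Import Lra Lia Psatz Classical.


Lemma mono_le (H dH : R -> R) (a b : R) : a <= b ->
  (forall u, a <= u <= b -> is_derive H u (dH u)) ->
  (forall u, a <= u <= b -> 0 <= dH u) -> H a <= H b.
Proof.
  intros hab hd hp.
  destruct (MVT_gen H a b dH) as [c [hc e]].
  - intros x hx. apply hd. rewrite Rmin_left in hx by lra. rewrite Rmax_right in hx by lra. lra.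
  - intros x hx. rewrite Rmin_left in hx by lra. rewrite Rmax_right in hx by lra.
    apply continuity_pt_filterlim. apply (@ex_derive_continuous R_AbsRing R_NormedModule). eexists; apply hd; lra.
  - rewrite Rmin_left in hc by lra. rewrite Rmax_right in hc by lra.
    assert (0 <= dH c) by (apply hp; lra). nra.
Qed.

Lemma mono_ge (H dH : R -> R) (a b : R) : a <= b ->
  (forall u, a <= u <= b -> is_derive H u (dH u)) ->
  (forall u, a <= u <= b -> dH u <= 0) -> H b <= H a.
Proof.
  intros hab hd hp.
  assert (- H a <= - H b); [|lra].
  apply (mono_le (fun u => - H u) (fun u => - dH u)); auto.
  - intros u hu. apply (@is_derive_opp R_AbsRing R_NormedModule). auto.
  - intros u hu. specialize (hp u hu). lra.
Qed.

Definition ga al y := Rpower y (1 - al).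
Definition pp al y := ga al y / y.
Definition Gb al y := y * ga al y / (2 - al).

Lemma ga_pos al y : 0 < ga al y.
Proof. unfold ga, Rpower. apply exp_pos. Qed.

Lemma pp_pos al y : 0 < y -> 0 < pp al y.
Proof. intros. unfold pp. pose proof (ga_pos al y). apply Rdiv_lt_0_compat; lra. Qed.

Lemma Rpow_pos y e : 0 < Rpower y e.
Proof. unfold Rpower. apply exp_pos. Qed.

Lemma pp_eq al y : 0 < y -> pp al y = / Rpower y al.
Proof.
  intros hy. unfold pp, ga.
  replace (1 - al) with (- al + 1) by ring. rewrite Rpower_plus, Rpower_1 by auto.
  rewrite Rpower_Ropp. pose proof (Rpow_pos y al). field. lra.
Qed.


Lemma pp_dec al y z : 0 <= al -> 0 < y <= z -> pp al z <= pp al y.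
Proof.
  intros ha hyz. rewrite !pp_eq by lra.
  apply Rinv_le_contravar. apply Rpow_pos. apply Rle_Rpower_l; lra.
Qed.

Lemma Rpower_1_base e : Rpower 1 e = 1.
Proof. unfold Rpower. rewrite ln_1, Rmult_0_r, exp_0. reflexivity. Qed.

Lemma pp_le1 al y : 0 <= al -> 1 <= y -> pp al y <= 1.
Proof.
  intros ha hy. rewrite pp_eq by lra. rewrite <- Rinv_1.
  apply Rinv_le_contravar. lra. rewrite <- (Rpower_1_base al). apply Rle_Rpower_l; lra.
Qed.

Lemma pp_ge1 al y : 0 <= al -> 0 < y <= 1 -> 1 <= pp al y.
Proof.
  intros ha hy. rewrite pp_eq by lra. rewrite <- Rinv_1.
  apply Rinv_le_contravar. apply Rpow_pos. rewrite <- (Rpower_1_base al). apply Rle_Rpower_l; lra.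
Qed.

Lemma d_pp al t : 0 < t -> is_derive (pp al) t (- al * (pp al t / t)).
Proof. intros. unfold pp, ga, Rpower. auto_derive. lra. field. lra. Qed.

Lemma pp_conv al y z : 0 <= al -> 0 < y <= z -> pp al z - pp al (z+1) <= pp al y - pp al (y+1).
Proof.
  intros ha hyz.
  apply (mono_ge (fun t => pp al t - pp al (t+1)) (fun t => - al * (pp al t / t) - - al * (pp al (t+1) / (t+1)))).
  lra.
  - intros u hu. apply (@is_derive_minus R_AbsRing R_NormedModule). apply d_pp; lra.
    apply (is_derive_ext (fun t => pp al (t+1))). reflexivity.
    pose proof (is_derive_comp (pp al) (fun t => t+1) u (- al * (pp al (u+1) / (u+1))) 1).
    simpl in H. replace (- al * (pp al (u + 1) / (u + 1))) with (scal 1 (- al * (pp al (u + 1) / (u + 1)))).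
    apply H. apply d_pp; lra. auto_derive; auto; ring. apply (scal_one (V:=R_NormedModule)).
  - intros u hu.
    assert (pp al (u+1) <= pp al u) by (apply pp_dec; lra).
    assert (0 < pp al (u+1)) by (apply pp_pos; lra).
    assert (pp al (u+1) / (u+1) <= pp al u / u).
    { unfold Rdiv. apply Rmult_le_compat; try lra. left; apply Rinv_0_lt_compat; lra.
      apply Rinv_le_contravar; lra. }
    nra.
Qed.

Lemma pp_lip al y z : 0 <= al -> 1 <= y <= z -> pp al y - pp al z <= al * (z - y).
Proof.
  intros ha hyz.
  assert (pp al y + al * y <= pp al z + al * z); [|lra].
  apply (mono_le (fun t => pp al t + al * t) (fun t => - al * (pp al t / t) + al)). lra.
  - intros u hu. unfold pp, ga, Rpower. auto_derive. lra. field. lra.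
  - intros u hu. assert (pp al u <= 1) by (apply pp_le1; lra).
    assert (0 < pp al u) by (apply pp_pos; lra).
    assert (pp al u / u <= 1).
    { apply Rcomplements.Rle_div_l; lra. }
    nra.
Qed.

Definition Areal al x := ga al x - ga al (x-1).
Definition Breal al x := Gb al x - Gb al (x-1) - (ga al x + ga al (x-1))/2.
Definition Cm al x := Areal al x + Breal al (x+1) - Breal al x.
Definition Cl al x := Areal al x - Breal al x.

Lemma K1 al x : 0 < al < 1 -> 1 < x -> (1 - al) * pp al x <= Cl al x.
Proof.
  intros ha hx.
  set (H := fun u => (3/2+u) * ga al (x+u) - (x+u) * ga al (x+u) / (2-al)
                     - (1-al) * pp al x * (3/2*u + u*u/2)).
  assert (h : H (-1) <= H 0).
  { apply (mono_le H (fun u => (1-al) * (3/2+u) * (pp al (x+u) - pp al x))). lra.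
    - intros u hu. unfold H, pp, ga, Rpower. auto_derive. lra. field. lra.
    - intros u hu. assert (pp al x <= pp al (x+u)) by (apply pp_dec; lra). 
      apply Rmult_le_pos. apply Rmult_le_pos; lra. lra. }
  assert (E : Cl al x - (1 - al) * pp al x = H 0 - H (-1)).
  { unfold H, Cl, Areal, Breal, Gb. cbv beta. replace (x + -1) with (x - 1) by ring. repeat rewrite Rplus_0_r.
    field. lra. }
  lra.
Qed.

Ltac normx x :=
  try replace (x + -1) with (x - 1) by lra;
  try replace (x + 1 + -1) with x by lra;
  try replace (x + 1 - 1) with x by lra;
  try replace (x + 1 + 1) with (x + 2) by lra;
  try replace (x + 2 - 1) with (x + 1) by lra;
  try replace (x + 1 + 0) with (x + 1) by lra;
  try replace (x + 1 - 0) with (x + 1) by lra;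
  try replace (x + 2 - 0) with (x + 2) by lra;
  try replace (x + 1 - 1/2) with (x + 1/2) by lra;
  try replace (x + 2 - 1/2) with (x + 1 + 1/2) by lra;
  repeat rewrite Rplus_0_r.

Definition H1f al x u := (3/2+u) * (ga al (x+u) - ga al (x+1+u)) - (Gb al (x+u) - Gb al (x+1+u)).

Lemma H1_mono al x : 0 < al < 1 -> 1 < x -> H1f al x (-1) <= H1f al x 0.
Proof.
  intros ha hx.
  apply (mono_le (H1f al x) (fun u => (1-al) * (3/2+u) * (pp al (x+u) - pp al (x+1+u)))). lra.
  - intros u hu. unfold H1f, Gb, pp, ga, Rpower. auto_derive. repeat split; lra. unfold Rminus. field. lra.
  - intros u hu. assert (pp al (x+1+u) <= pp al (x+u)) by (apply pp_dec; lra).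
    apply Rmult_le_pos. apply Rmult_le_pos; lra. lra.
Qed.

Definition H2f al x u := (1/2-u) * (ga al (x+u) - ga al (x+1+u)) + Gb al (x+u) - Gb al (x+1+u)
  + (1/2-u) * (ga al (x+1-u) - ga al (x+2-u)) - Gb al (x+1-u) + Gb al (x+2-u).

Lemma H2_mono al x : 0 < al < 1 -> 1 < x -> H2f al x 0 <= H2f al x (1/2).
Proof.
  intros ha hx.
  apply (mono_le (H2f al x) (fun u => (1-al) * (1/2-u) *
     ((pp al (x+u) - pp al (x+1+u)) - (pp al (x+1-u) - pp al (x+2-u))))). lra.
  - intros u hu. unfold H2f, Gb, pp, ga, Rpower. auto_derive. repeat split; lra. unfold Rminus. field. lra.
  - intros u hu.
    assert (pp al (x+1-u) - pp al (x+1-u+1) <= pp al (x+u) - pp al (x+u+1)) by (apply pp_conv; lra).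
    replace (x+1-u+1) with (x+2-u) in H by ring. replace (x+u+1) with (x+1+u) in H by ring.
    apply Rmult_le_pos. apply Rmult_le_pos; lra. lra.
Qed.

Definition H3f al x u := (1/2-u) * ga al (x+u) + Gb al (x+u) + (1/2-u) * ga al (x+1-u) - Gb al (x+1-u).

Lemma H3_mono al x : 0 < al < 1 -> 1 < x -> H3f al x 0 <= H3f al x (1/2).
Proof.
  intros ha hx.
  apply (mono_le (H3f al x) (fun u => (1-al) * (1/2-u) * (pp al (x+u) - pp al (x+1-u)))). lra.
  - intros u hu. unfold H3f, Gb, pp, ga, Rpower. auto_derive. repeat split; lra. unfold Rminus. field. lra.
  - intros u hu. assert (pp al (x+1-u) <= pp al (x+u)) by (apply pp_dec; lra).
    apply Rmult_le_pos. apply Rmult_le_pos; lra. lra.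
Qed.

Lemma L2 al x : 0 < al < 1 -> 1 < x -> Cm al (x+1) <= Cm al x.
Proof.
  intros ha hx. pose proof (H1_mono al x ha hx). pose proof (H2_mono al x ha hx).
  assert (E : Cm al x - Cm al (x+1) = H1f al x 0 - H1f al x (-1) + (H2f al x (1/2) - H2f al x 0)).
  { unfold Cm, Areal, Breal, H1f, H2f, Gb. normx x. field. lra. }
  lra.
Qed.

Lemma L3 al x : 0 < al < 1 -> 1 < x -> Cl al (x+1) <= Cm al x.
Proof.
  intros ha hx. pose proof (H1_mono al x ha hx). pose proof (H3_mono al x ha hx).
  assert (E : Cm al x - Cl al (x+1) = H1f al x 0 - H1f al x (-1) + (H3f al x (1/2) - H3f al x 0)).
  { unfold Cm, Cl, Areal, Breal, H1f, H3f, Gb. normx x. field. lra. }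
  lra.
Qed.

Lemma KA al s : 0 < al < 1 -> 0 < s ->
  2 * ga al (1+s) - 2 * Gb al (1+s) + 2 * Gb al s <= (1-al) * pp al s.
Proof.
  intros ha hs.
  set (H := fun u => 2 * u * ga al (s+u) - 2 * Gb al (s+u) - (1-al) * pp al s * (u*u)).
  assert (h : H 1 <= H 0).
  { apply (mono_ge H (fun u => 2 * u * (1-al) * (pp al (s+u) - pp al s))). lra.
    - intros u hu. unfold H, Gb, pp, ga, Rpower. auto_derive. lra. unfold Rminus. field. lra.
    - intros u hu. assert (pp al (s+u) <= pp al s) by (apply pp_dec; lra).
      assert (0 <= 2 * u * (1 - al)) by nra. nra. }
  unfold H in h. cbv beta in h. repeat rewrite Rplus_0_r in h.
  replace (s + 1) with (1 + s) in h by lra. unfold Gb in *. 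
  assert (Gb0 : 0 * s * ga al s / (2 - al) = 0) by (unfold Rdiv; ring).
  unfold Rdiv in *. nra.
Qed.

Lemma KC al s : 0 < al < 1 -> 0 < s -> Cl al (1+s) <= (1-al) * pp al s.
Proof.
  intros ha hs.
  set (H := fun u => (1/2+u) * ga al (s+u) - Gb al (s+u) - (1-al) * pp al s * (u/2+u*u/2)).
  assert (h : H 1 <= H 0).
  { apply (mono_ge H (fun u => (1/2+u) * (1-al) * (pp al (s+u) - pp al s))). lra.
    - intros u hu. unfold H, Gb, pp, ga, Rpower. auto_derive. lra. unfold Rminus. field. lra.
    - intros u hu. assert (pp al (s+u) <= pp al s) by (apply pp_dec; lra).
      assert (0 <= (1/2+u) * (1 - al)) by nra. nra. }
  assert (E : Cl al (1+s) - (1-al) * pp al s = H 1 - H 0).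
  { unfold H, Cl, Areal, Breal, Gb. cbv beta.
    replace (1 + s - 1) with s by lra. replace (s + 1) with (1 + s) by lra.
    repeat rewrite Rplus_0_r. field. lra. }
  lra.
Qed.

Lemma KB al s : 0 < al < 1 -> 0 < s ->
  0 <= Breal al (2+s) <= (1-al) * al / 12.
Proof.
  intros ha hs.
  set (a := 3/2 + s).
  set (H := fun v => Gb al (a+v) - Gb al (a-v) - v * (ga al (a+v) + ga al (a-v))).
  assert (E : Breal al (2+s) = H (1/2)).
  { unfold H, Breal, a. replace (2 + s - 1) with (3/2 + s - 1/2) by lra.
    replace (2 + s) with (3/2 + s + 1/2) by lra. field. }
  assert (H0 : H 0 = 0).
  { unfold H. replace (a + 0) with a by lra. replace (a - 0) with a by lra. ring. }
  assert (dH : forall v, 0 <= v <= 1/2 -> is_derive H v ((1-al) * v * (pp al (a-v) - pp al (a+v)))).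
  { intros v hv. unfold H, Gb, pp, ga, Rpower, a. auto_derive. repeat split; lra.
    unfold Rminus. field. lra. }
  split.
  - rewrite E, <- H0. apply (mono_le H (fun v => (1-al) * v * (pp al (a-v) - pp al (a+v)))). lra.
    exact dH.
    intros v hv. assert (pp al (a+v) <= pp al (a-v)) by (apply pp_dec; unfold a; lra).
    assert (0 <= (1-al) * v) by nra. nra.
  - assert (H (1/2) - (1-al)*al*(1/2)^3*2/3 <= H 0 - (1-al)*al*0^3*2/3); [|rewrite E; lra].
    apply (mono_ge (fun v => H v - (1-al)*al*v^3*2/3)
      (fun v => (1-al) * v * (pp al (a-v) - pp al (a+v)) - 2 * (1-al) * al * v * v)). lra.
    + intros v hv. apply (@is_derive_minus R_AbsRing R_NormedModule). apply dH; auto.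
      auto_derive; auto. field.
    + intros v hv. assert (pp al (a-v) - pp al (a+v) <= al * (a + v - (a - v))) by (apply pp_lip; unfold a; lra).
      assert (0 <= (1-al) * v) by nra. nra.
Qed.

Lemma Rpow2 al y : 0 < y -> Rpower y (2 - al) = y * Rpower y (1 - al).
Proof. intros. replace (2 - al) with (1 + (1 - al)) by ring. rewrite Rpower_plus, Rpower_1; auto. Qed.

Lemma a_coef_S al k : (1 <= k)%nat ->
  a_coef al (1 - al/2) k = Areal al (INR k + (1 - al/2)).
Proof.
  intros hk. destruct k as [|k']; [lia|]. unfold a_coef, Areal, ga.
  replace (INR (S k') - 1 + (1 - al/2)) with (INR (S k') + (1 - al/2) - 1) by ring. reflexivity.
Qed.

Lemma b_coef_S al k : 0 < al < 1 -> (1 <= k)%nat ->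
  b_coef al (1 - al/2) k = Breal al (INR k + (1 - al/2)).
Proof.
  intros ha hk. assert (1 <= INR k) by (apply (le_INR 1); lia).
  unfold b_coef, Breal, Gb, ga.
  replace (INR k - 1 + (1 - al/2)) with (INR k + (1 - al/2) - 1) by ring.
  rewrite !Rpow2 by lra. field. lra.
Qed.

Lemma c_zero' al j : c_coef al (1 - al/2) 0 j = ga al (1 - al/2).
Proof. reflexivity. Qed.

Lemma c_first al j : 0 < al < 1 -> (1 <= j)%nat ->
  c_coef al (1 - al/2) j 0 = ga al (1 - al/2) + Breal al (1 + (1 - al/2)).
Proof.
  intros ha hj. destruct j; [lia|]. simpl c_coef. rewrite b_coef_S by (auto; lia).
  unfold a_coef, ga. simpl INR. reflexivity.
Qed.

Lemma c_mid al j k : 0 < al < 1 -> (1 <= k)%nat -> (k < j)%nat ->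
  c_coef al (1 - al/2) j k = Cm al (INR k + (1 - al/2)).
Proof.
  intros ha hk hkj. destruct j as [|j']; [lia|]. destruct k as [|k']; [lia|].
  unfold c_coef. rewrite (proj2 (Nat.eqb_neq (S k') (S j'))) by lia.
  rewrite a_coef_S, !b_coef_S by (auto; lia). unfold Cm.
  rewrite (S_INR (S k')). replace (INR (S k') + 1 + (1 - al / 2)) with (INR (S k') + (1 - al / 2) + 1) by ring. reflexivity.
Qed.

Lemma c_last al j : 0 < al < 1 -> (1 <= j)%nat ->
  c_coef al (1 - al/2) j j = Cl al (INR j + (1 - al/2)).
Proof.
  intros ha hj. destruct j as [|j']; [lia|].
  unfold c_coef. rewrite Nat.eqb_refl. rewrite a_coef_S, b_coef_S by (auto; lia). reflexivity.
Qed.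

Lemma ga_pp al y : 0 < y -> ga al y = y * pp al y.
Proof. intros. unfold pp. field. lra. Qed.

Lemma F1 al j : 0 < al < 1 -> (1 - al) * pp al (INR j + (1 - al/2)) <= c_coef al (1 - al/2) j j.
Proof.
  intros ha. destruct j as [|j'].
  - rewrite c_zero'. simpl INR. rewrite Rplus_0_l. rewrite (ga_pp al) by lra.
    assert (0 < pp al (1 - al/2)) by (apply pp_pos; lra). nra.
  - rewrite c_last by (auto; lia). apply K1; auto.
    assert (1 <= INR (S j')) by (apply (le_INR 1); lia). lra.
Qed.

Lemma F2 al j k : 0 < al < 1 -> (1 <= k)%nat -> (k < j)%nat ->
  c_coef al (1 - al/2) j (S k) <= c_coef al (1 - al/2) j k.
Proof.
  intros ha hk hkj. assert (1 <= INR k) by (apply (le_INR 1); lia).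
  rewrite (c_mid al j k) by auto.
  destruct (Nat.eq_dec (S k) j) as [e|ne].
  - subst j. rewrite c_last by (auto; lia). rewrite S_INR.
    replace (INR k + 1 + (1 - al/2)) with (INR k + (1 - al/2) + 1) by ring. apply L3; auto; lra.
  - rewrite c_mid by (auto; lia). rewrite S_INR.
    replace (INR k + 1 + (1 - al/2)) with (INR k + (1 - al/2) + 1) by ring. apply L2; auto; lra.
Qed.

Lemma F3 al j : 0 < al < 1 -> (1 <= j)%nat ->
  let c0 := c_coef al (1 - al/2) j 0 in let c1 := c_coef al (1 - al/2) j 1 in
  (al/2)^2 * c1 <= (c0 - c1) * (2 * (1 - al/2) - 1).
Proof.
  intros ha hj c0 c1. set (s := 1 - al/2).
  assert (hs : 1/2 < s < 1) by (unfold s; lra).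
  pose proof (KA al s ha ltac:(lra)) as hA.
  pose proof (KC al s ha ltac:(lra)) as hC.
  pose proof (KB al s ha ltac:(lra)) as hB.
  assert (hP : 1 <= pp al s) by (apply pp_ge1; lra).
  assert (gs : ga al s = s * pp al s) by (apply ga_pp; lra).
  assert (hc0 : c0 = ga al s + Breal al (1 + s)) by (apply c_first; auto).
  assert (A : c0 - Cl al (1+s) = ga al s - (2 * ga al (1+s) - 2 * Gb al (1+s) + 2 * Gb al s)).
  { rewrite hc0. unfold Cl, Areal, Breal. replace (1 + s - 1) with s by lra. field. }
  set (P := pp al s) in *. set (b := Breal al (2 + s)) in *.
  assert (key : forall C1 b, C1 <= (1 - al) * P -> 0 <= b -> b <= (1 - al) * al / 12 ->
     forall A0, (al/2) * P <= A0 -> (al/2)^2 * (C1 + b) <= (A0 - b) * (1 - al)).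
  { intros C1 b0 h1 h2 h3 A0 h4.
    assert ((al/2)^2 * C1 <= (al/2)^2 * ((1-al) * P)) by (apply Rmult_le_compat_l; nra).
    assert ((al/2) * P * (1 - al) <= A0 * (1 - al)) by (apply Rmult_le_compat_r; lra).
    assert (al / 4 * (1 - al) <= (al/2 - (al/2)^2) * P * (1 - al)).
    { assert (0 <= (al/2 - (al/2)^2) * (1 - al)) by nra. nra. }
    nra. }
  replace (2 * s - 1) with (1 - al) by (unfold s; lra).
  destruct (Nat.eq_dec j 1) as [e|ne].
  - subst j. assert (hc1 : c1 = Cl al (1 + s)).
    { unfold c1. rewrite c_last by (auto; lia). simpl INR. reflexivity. }
    rewrite hc1.
    pose proof (key (Cl al (1+s)) 0 hC (Rle_refl 0) ltac:(nra) (c0 - Cl al (1+s))) as k.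
    assert (al / 2 * P <= c0 - Cl al (1 + s)) by (rewrite A; rewrite gs; unfold s in *; nra).
    specialize (k H). rewrite Rplus_0_r, Rminus_0_r in k. exact k.
  - assert (hc1 : c1 = Cl al (1 + s) + b).
    { unfold c1. rewrite c_mid by (auto; lia). simpl INR. unfold Cm, Cl, b.
      fold s. replace (1 + s + 1) with (2 + s) by lra. ring. }
    rewrite hc1.
    replace (c0 - (Cl al (1 + s) + b)) with ((c0 - Cl al (1+s)) - b) by ring.
    apply key; try tauto.
    rewrite A, gs. unfold s in *. nra.
Qed.

Lemma rsum_S n g : rsum (S n) g = rsum n g + g n.
Proof. reflexivity. Qed.

Lemma alik (c : nat -> R) (j : nat) (sg : R) (v : nat -> R) :
  1/2 <= sg <= 1 ->
  (forall k, (1 <= k)%nat -> (k < j)%nat -> c (S k) <= c k) ->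
  0 <= c j ->
  ((1 <= j)%nat -> (1 - sg)^2 * c 1%nat <= (c 0%nat - c 1%nat) * (2 * sg - 1)) ->
  1/2 * rsum (S j) (fun s => c (j - s)%nat * (v (S s) ^2 - v s ^2)) <=
  (sg * v (S j) + (1 - sg) * v j) * rsum (S j) (fun s => c (j - s)%nat * (v (S s) - v s)).
Proof.
  intros hsg hmono hcj h01.
  set (u := v (S j)).
  set (A := fun s => u - v s).
  set (K0 := (1 - sg) * A j).
  set (F := fun X => X * X / 2 - K0 * X).
  set (K := K0 * K0 / 2).
  assert (Fl : forall X, - K <= F X).
  { intros X. unfold F, K. pose proof (Rle_0_sqr (X - K0)). unfold Rsqr in H. lra. }
  set (Sm := fun n => rsum n (fun s => c (j - s)%nat * (F (A s) - F (A (Datatypes.S s))))).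
  assert (E : forall n, (sg * v (Datatypes.S j) + (1 - sg) * v j) * rsum n (fun s => c (j - s)%nat * (v (Datatypes.S s) - v s))
     - 1/2 * rsum n (fun s => c (j - s)%nat * (v (Datatypes.S s) ^2 - v s ^2)) = Sm n).
  { induction n. unfold Sm; simpl; ring.
    unfold Sm in *. rewrite !rsum_S. rewrite <- IHn. unfold F, K0, A, u. field. }
  assert (0 <= Sm (Datatypes.S j)); [| specialize (E (Datatypes.S j)); fold u in E; lra].
  set (T := fun n => Sm n + c (j - n)%nat * F (A n)).
  assert (TS : forall n, T (Datatypes.S n) = T n + (c (j - Datatypes.S n)%nat - c (j - n)%nat) * F (A (Datatypes.S n))).
  { intros n. unfold T, Sm. rewrite rsum_S. ring. }
  assert (Send : Sm (Datatypes.S j) = T j).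
  { unfold T, Sm. rewrite rsum_S. replace (j - j)%nat with 0%nat by lia.
    assert (F (A (Datatypes.S j)) = 0) by (unfold F, A, u; field). rewrite H. ring. }
  rewrite Send.
  assert (FAj : F (A j) = (sg - 1/2) * (A j * A j)) by (unfold F, K0; field).
  destruct j as [|j'].
  - unfold T, Sm. simpl. rewrite FAj. assert (0 <= A 0%nat * A 0%nat) by nra.
    change (0 - 0)%nat with 0%nat. rewrite Rplus_0_l. apply Rmult_le_pos. lra. apply Rmult_le_pos; lra.
  - assert (ind : forall n, (n <= j')%nat -> - K * c (Datatypes.S j' - n)%nat <= T n).
    { induction n; intros hn.
      - unfold T, Sm. simpl rsum. replace (Datatypes.S j' - 0)%nat with (Datatypes.S j') by lia.
        specialize (Fl (A 0%nat)). nra.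
      - rewrite TS. specialize (IHn ltac:(lia)).
        assert (hm : c (Datatypes.S j' - n)%nat <= c (Datatypes.S j' - Datatypes.S n)%nat).
        { replace (Datatypes.S j' - n)%nat with (Datatypes.S (Datatypes.S j' - Datatypes.S n)) by lia.
          apply hmono; lia. }
        specialize (Fl (A (Datatypes.S n))). nra. }
    specialize (ind j' (Nat.le_refl _)).
    rewrite TS. replace (Datatypes.S j' - j')%nat with 1%nat in * by lia.
    replace (Datatypes.S j' - Datatypes.S j')%nat with 0%nat by lia.
    rewrite FAj. specialize (h01 ltac:(lia)).
    assert (K = (1 - sg)^2 * (A (Datatypes.S j') * A (Datatypes.S j')) / 2) by (unfold K, K0; field).
    assert (0 <= A (Datatypes.S j') * A (Datatypes.S j')) by nra.
    nra.
Qed.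

Lemma gron (c : nat -> nat -> R) (w : nat -> R) (P : R) (M : nat) :
  (forall j k, (k < j)%nat -> c j (S k) <= c j k) -> (forall j, 0 < c j 0%nat) ->
  (forall j, (j < M)%nat -> rsum (S j) (fun s => c j (j - s)%nat * (w (S s) - w s)) <= c j j * P) ->
  forall j, (j < M)%nat -> w (S j) <= w 0%nat + P.
Proof.
  intros hmono hpos hB.
  assert (strong : forall m j, (j <= m)%nat -> (j < M)%nat -> w (S j) <= w 0%nat + P).
  2: { intros j hj. apply (strong j j); lia. }
  induction m; intros j hjm hjM.
  - assert (j = 0%nat) by lia. subst j. specialize (hB 0%nat hjM). simpl in hB.
    specialize (hpos 0%nat). replace (0 - 0)%nat with 0%nat in hB by reflexivity.
    assert (0 <= c 0%nat 0%nat * (w 0%nat + P - w 1%nat)) by nra.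
    apply Rmult_le_reg_l with (c 0%nat 0%nat); nra.
  - destruct (Nat.le_gt_cases j m) as [hle|hgt]. apply IHm; lia.
    assert (j = S m) by lia. subst j.
    set (j := S m) in *.
    set (W := fun s => w s - w 0%nat).
    set (T := fun n => rsum n (fun s => c j (j - s)%nat * (w (S s) - w s)) - c j (j - n)%nat * W n).
    assert (ind : forall n, (n <= j)%nat -> - (c j (j - n)%nat - c j j) * P <= T n).
    { induction n; intros hn.
      - unfold T, W, j. simpl. try replace (S m - 0)%nat with (S m) by lia. apply Req_le; ring.
      - specialize (IHn ltac:(lia)).
        assert (hW : W (S n) <= P).
        { unfold W. assert (w (S n) <= w 0%nat + P); [|lra].
          destruct n as [|n']. unfold j in *. apply IHm; lia. apply IHm; unfold j in *; lia. }
        assert (hm : c j (j - n)%nat <= c j (j - S n)%nat).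
        { replace (j - n)%nat with (S (j - S n)) by lia. apply hmono; lia. }
        assert (e : T (S n) = T n - (c j (j - S n)%nat - c j (j - n)%nat) * W (S n)).
        { unfold T, W. rewrite rsum_S. ring. }
        rewrite e. nra. }
    specialize (ind j (Nat.le_refl _)).
    assert (e : rsum (S j) (fun s => c j (j - s)%nat * (w (S s) - w s)) = T j + c j 0%nat * W (S j)).
    { unfold T, W. rewrite rsum_S. replace (j - j)%nat with 0%nat by lia. ring. }
    specialize (hB j hjM). rewrite e in hB. replace (j - j)%nat with 0%nat in ind by lia.
    specialize (hpos j). unfold W in hB.
    assert (0 <= c j 0%nat * (w 0%nat + P - w (S j))) by nra.
    apply Rmult_le_reg_l with (c j 0%nat); nra.
Qed.

Lemma rsum_ext n f g : (forall i, (i < n)%nat -> f i = g i) -> rsum n f = rsum n g.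
Proof. induction n; intros h; simpl. auto. rewrite IHn by (intros; apply h; lia). rewrite h by lia. auto. Qed.

Lemma rsum_le n f g : (forall i, (i < n)%nat -> f i <= g i) -> rsum n f <= rsum n g.
Proof. induction n; intros h; simpl. lra. assert (rsum n f <= rsum n g) by (apply IHn; intros; apply h; lia).
  assert (f n <= g n) by (apply h; lia). lra. Qed.

Lemma rsum_plus n f g : rsum n (fun i => f i + g i) = rsum n f + rsum n g.
Proof. induction n; simpl. ring. rewrite IHn. ring. Qed.

Lemma rsum_minus n f g : rsum n (fun i => f i - g i) = rsum n f - rsum n g.
Proof. induction n; simpl. ring. rewrite IHn. ring. Qed.

Lemma rsum_scal n c f : rsum n (fun i => c * f i) = c * rsum n f.
Proof. induction n; simpl. ring. rewrite IHn. ring. Qed.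

Lemma rsum_nonneg n f : (forall i, (i < n)%nat -> 0 <= f i) -> 0 <= rsum n f.
Proof. intros h. replace 0 with (rsum n (fun _ => 0)). apply rsum_le; auto.
  induction n; simpl; auto. rewrite IHn. ring. intros; apply h; lia. Qed.

Lemma rsum_swap n m (f : nat -> nat -> R) :
  rsum n (fun i => rsum m (fun s => f i s)) = rsum m (fun s => rsum n (fun i => f i s)).
Proof. induction n; simpl.
  - assert (forall k, rsum k (fun _ => 0) = 0) as Z by (induction k; simpl; [auto| rewrite IHk; ring]).
    rewrite Z. auto.
  - rewrite IHn. rewrite <- rsum_plus. auto. Qed.

Lemma rsum_mono_n n m f : (n <= m)%nat -> (forall i, 0 <= f i) -> rsum n f <= rsum m f.
Proof. intros h hf. induction h. lra. simpl. specialize (hf m). lra. Qed.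

Lemma rsum_shift0 n (Q : nat -> R) : rsum n Q = Q 0%nat + rsum n (fun i => Q (S i)) - Q n.
Proof. induction n; simpl. ring. rewrite IHn. ring. Qed.

Lemma rsum_shift2 n (Q : nat -> R) :
  rsum n (fun i => Q (S (S i))) = rsum n (fun i => Q (S i)) - Q 1%nat + Q (S n).
Proof. induction n; simpl. ring. rewrite IHn. ring. Qed.

Lemma cauchy n a : rsum n a * rsum n a <= INR n * rsum n (fun i => a i * a i).
Proof.
  induction n. simpl. lra.
  simpl rsum. rewrite S_INR.
  destruct n as [|n']. simpl. nra.
  assert (hQ : 0 <= rsum (S n') (fun i => a i * a i)) by (apply rsum_nonneg; intros; nra).
  assert (hn : 0 < INR (S n')) by (apply lt_0_INR; lia).
  remember (rsum (S n') a) as S0. remember (rsum (S n') (fun i => a i * a i)) as Q.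
  remember (INR (S n')) as nn. remember (a (S n')) as an.
clear HeqS0 HeqQ Heqnn Heqan.
  assert (h2 : 2 * S0 * an * nn <= S0 * S0 + nn * nn * (an * an)) by (pose proof (Rle_0_sqr (S0 - nn * an)); unfold Rsqr in *; nra).
  assert (h3 : 2 * S0 * an <= Q + nn * (an * an)).
  { apply Rmult_le_reg_r with nn; auto. nra. }
  nra.
Qed.

Lemma rsum_scal_r n c f : rsum n (fun i => f i * c) = rsum n f * c.
Proof. induction n; simpl. ring. rewrite IHn. ring. Qed.

Lemma tele v i : v (S i) = v 0%nat + rsum (S i) (fun k => v (S k) - v k).
Proof. induction i. simpl. ring.
  assert (E : rsum (S (S i)) (fun k => v (S k) - v k) = rsum (S i) (fun k => v (S k) - v k) + (v (S (S i)) - v (S i))) by reflexivity.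
  rewrite E, <- Rplus_assoc, <- IHi. ring. Qed.

Lemma sum_INR n : rsum n (fun i => INR (S i)) = INR n * (INR n + 1) / 2.
Proof. induction n. simpl. field.
  change (rsum (S n) (fun i => INR (S i))) with (rsum n (fun i => INR (S i)) + INR (S n)).
  rewrite IHn. rewrite !S_INR. field. Qed.

Lemma sbp n (v D : nat -> R) : (forall i, D i = v (S i) - v i) ->
  rsum n (fun i => (D i - D (S i)) * v (S i)) = rsum (S n) (fun i => D i * D i) + v 0%nat * D 0%nat - v (S n) * D n.
Proof. intros hD. induction n. simpl. rewrite !hD. ring.
  change (rsum (S n) (fun i => (D i - D (S i)) * v (S i))) with
    (rsum n (fun i => (D i - D (S i)) * v (S i)) + (D n - D (S n)) * v (S n)).
  rewrite IHn. change (rsum (S (S n)) (fun i => D i * D i)) with (rsum (S n) (fun i => D i * D i) + D (S n) * D (S n)).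
  rewrite !hD. ring. Qed.

Lemma space (N : nat) (h l : R) (v : nat -> R) : (1 <= N)%nat -> 0 < l -> h = l / INR N ->
  v 0%nat = 0 -> v N = 0 ->
  4 / (3 * l ^ 2) * rsum (N - 1) (fun i => Hh v (S i) * Hh v (S i) * h)
  <= rsum (N - 1) (fun i => - dxx h v (S i) * Hh v (S i) * h).
Proof.
  intros hN hl hh v0 vN.
  destruct N as [|n]; [lia|]. replace (S n - 1)%nat with n by lia.
  assert (hNp : 0 < INR (S n)) by (apply lt_0_INR; lia).
  assert (hhp : 0 < h) by (rewrite hh; apply Rdiv_lt_0_compat; lra).
  set (D := fun i => v (S i) - v i).
  set (RD := rsum (S n) (fun i => D i * D i)).
  assert (RDp : 0 <= RD) by (apply rsum_nonneg; intros; nra).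
  (* (a) Jensen *)
  assert (ha : rsum n (fun i => Hh v (S i) * Hh v (S i)) <= rsum n (fun i => v (S i) * v (S i))).
  { set (Q := fun i => v i * v i).
    apply Rle_trans with (rsum n (fun i => (Q i + 10 * Q (S i) + Q (S (S i))) / 12)).
    - apply rsum_le. intros i hi. unfold Hh, Q. simpl Nat.pred.
      pose proof (Rle_0_sqr (v i - v (S i))). pose proof (Rle_0_sqr (v (S (S i)) - v (S i))).
      pose proof (Rle_0_sqr (v i - v (S (S i)))). unfold Rsqr in *. nra.
    - unfold Rdiv. rewrite rsum_scal_r, !rsum_plus, rsum_scal, rsum_shift2.
      rewrite (rsum_shift0 n Q).
      assert (Q 0%nat = 0) by (unfold Q; rewrite v0; ring).
      assert (Q (S n) = 0) by (unfold Q; rewrite vN; ring).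
      assert (0 <= Q n) by (unfold Q; nra). assert (0 <= Q 1%nat) by (unfold Q; nra).
      change (rsum n (fun i => v (S i) * v (S i))) with (rsum n (fun i => Q (S i))). lra. }
  (* (b) Poincare *)
  assert (hb : rsum n (fun i => v (S i) * v (S i)) <= INR (S n) * INR (S n) / 2 * RD).
  { apply Rle_trans with (rsum n (fun i => INR (S i) * RD)).
    - apply rsum_le. intros i hi. rewrite (tele v i), v0, Rplus_0_l.
      apply Rle_trans with (INR (S i) * rsum (S i) (fun k => (v (S k) - v k) * (v (S k) - v k))).
      apply cauchy. apply Rmult_le_compat_l. apply pos_INR.
      apply rsum_mono_n. lia. intros; nra.
    - rewrite rsum_scal_r, sum_INR. rewrite S_INR.
      assert (0 <= INR n) by apply pos_INR. nra. }
  assert (hc : 2 / (3 * h * h) * RD <= rsum n (fun i => - dxx h v (S i) * Hh v (S i))).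
  { assert (e : forall i, - dxx h v (S i) * Hh v (S i) =
        ((D i - D (S i)) * v (S i) - (D i - D (S i)) * (D i - D (S i)) / 12) / (h * h)).
    { intros i. unfold dxx, Hh, D. simpl Nat.pred. field. lra. }
    rewrite (rsum_ext _ _ _ (fun i _ => e i)). unfold Rdiv at 2.
    rewrite rsum_scal_r, rsum_minus, (sbp n v D) by (intros; unfold D; reflexivity). rewrite v0, vN. fold RD.
    assert (hs : rsum n (fun i => (D i - D (S i)) * (D i - D (S i)) / 12) <= RD / 3).
    { apply Rle_trans with (rsum n (fun i => (D i * D i + D (S i) * D (S i)) / 6)).
      apply rsum_le. intros i _. pose proof (Rle_0_sqr (D i + D (S i))). unfold Rsqr in *. nra.
      unfold Rdiv. rewrite rsum_scal_r, rsum_plus.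
      assert (rsum n (fun i => D i * D i) <= RD) by (apply rsum_mono_n; [lia| intros; nra]).
      pose proof (rsum_shift0 n (fun i => D i * D i)) as sh. cbv beta in sh.
      assert (RD = rsum n (fun i => D i * D i) + D n * D n) by reflexivity.
      assert (0 <= D 0%nat * D 0%nat) by nra. assert (0 <= D n * D n) by nra. lra. }
    assert (2 / (3 * h * h) * RD = (RD - RD/3) * / (h * h)) by (field; lra). rewrite H.
    apply Rmult_le_compat_r. apply Rlt_le, Rinv_0_lt_compat; nra. lra. }
  rewrite !rsum_scal_r.
  assert (eh : 4 / (3 * l ^ 2) * (INR (S n) * INR (S n) / 2) = 2 / (3 * h * h)).
  { rewrite hh. field. lra. }
  apply Rle_trans with (4 / (3 * l ^ 2) * (INR (S n) * INR (S n) / 2 * RD) * h).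
  - rewrite Rmult_assoc. apply Rmult_le_compat_l. apply Rlt_le, Rdiv_lt_0_compat; nra.
    apply Rmult_le_compat_r; lra.
  - apply Rmult_le_compat_r; [lra|]. rewrite <- Rmult_assoc, eh. lra.
Qed.

Lemma ballR (x e y : R) : Rabs (y - x) < e -> ball x e y.
Proof. intros h. exact h. Qed.

Lemma ballR' (x e y : R) : ball x e y -> Rabs (y - x) < e.
Proof. intros h. exact h. Qed.

Definition f1 al t := Rpower t (1 - al) / t * exp (- t).

Lemma f1_cont al t : 0 < t -> continuous (f1 al) t.
Proof.
  intros ht. apply (@ex_derive_continuous R_AbsRing R_NormedModule).
  unfold f1, Rpower. auto_derive. lra.
Qed.

Lemma f1_pos al t : 0 < t -> 0 < f1 al t.
Proof.
  intros. unfold f1. apply Rmult_lt_0_compat. apply Rdiv_lt_0_compat; auto. apply Rpow_pos. apply exp_pos.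
Qed.

Lemma f1_ex al a b : 0 < a -> 0 < b -> ex_RInt (f1 al) a b.
Proof.
  intros ha hb. apply (@ex_RInt_continuous R_CompleteNormedModule). intros z hz. apply f1_cont.
  assert (0 < Rmin a b) by (apply Rmin_glb_lt; auto). lra.
Qed.

Definition FF al x := RInt (f1 al) 1 x.

Lemma FF_is al a b : 0 < a -> 0 < b -> is_RInt (f1 al) a b (FF al b - FF al a).
Proof.
  intros ha hb. replace (FF al b - FF al a) with (RInt (f1 al) a b).
  apply (@RInt_correct R_CompleteNormedModule). apply f1_ex; auto.
  unfold FF.
  assert (E : @eq R (RInt (f1 al) 1 a + RInt (f1 al) a b) (RInt (f1 al) 1 b)).
  { apply (RInt_Chasles (V:=R_CompleteNormedModule) (f1 al) 1 a b). apply f1_ex; lra. apply f1_ex; lra. }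
  lra.
Qed.

Lemma FF_der al x : 0 < x -> is_derive (FF al) x (f1 al x).
Proof.
  intros hx. apply (is_derive_RInt (V:=R_CompleteNormedModule) (f1 al) (FF al) 1 x).
  - exists (mkposreal (x/2) ltac:(lra)). intros y hy. apply ballR' in hy. simpl in hy.
    unfold FF. apply (@RInt_correct R_CompleteNormedModule). apply f1_ex.
    lra. apply Rabs_lt_between in hy. lra.
  - apply f1_cont; auto.
Qed.

Lemma f1_pp al t : f1 al t = pp al t * exp (- t).
Proof. reflexivity. Qed.

Lemma FF_incr al x y : 0 < x <= y -> FF al x <= FF al y.
Proof.
  intros h. apply (mono_le (FF al) (f1 al)). lra.
  intros u hu. apply FF_der; lra. intros u hu. left; apply f1_pos; lra.
Qed.

Lemma FF_1 al : FF al 1 = 0.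
Proof. unfold FF. apply (RInt_point (V:=R_CompleteNormedModule)). Qed.

Lemma FF_up al x : 0 < al < 1 -> 1 <= x -> FF al x <= 1.
Proof.
  intros ha hx.
  assert (FF al x + exp (- x) <= FF al 1 + exp (- 1)).
  { apply (mono_ge (fun t => FF al t + exp (- t)) (fun t => f1 al t + - exp (- t))). lra.
    - intros u hu. apply (@is_derive_plus R_AbsRing R_NormedModule). apply FF_der; lra.
      auto_derive; auto. ring.
    - intros u hu. rewrite f1_pp. assert (pp al u <= 1) by (apply pp_le1; lra).
      pose proof (exp_pos (- u)). nra. }
  rewrite FF_1 in H. pose proof (exp_pos (-x)).
  assert (exp (-1) <= 1). { rewrite <- exp_0. left. apply exp_increasing. lra. }
  lra.
Qed.

Lemma FF_low al x : 0 < al < 1 -> 0 < x <= 1 -> - / (1 - al) <= FF al x.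
Proof.
  intros ha hx.
  assert (FF al 1 - Rpower 1 (1 - al) / (1 - al) <= FF al x - Rpower x (1 - al) / (1 - al)).
  { apply (mono_ge (fun t => FF al t - Rpower t (1 - al) / (1 - al)) (fun t => f1 al t - pp al t)). lra.
    - intros u hu. apply (@is_derive_minus R_AbsRing R_NormedModule). apply FF_der; lra.
      unfold Rpower, pp, ga, Rpower. auto_derive. lra. field. split; lra.
    - intros u hu. rewrite f1_pp. assert (0 < pp al u) by (apply pp_pos; lra).
      assert (exp (- u) <= 1). { rewrite <- exp_0. left. apply exp_increasing. lra. }
      nra. }
  rewrite FF_1, Rpower_1_base in H.
  assert (0 <= Rpower x (1 - al) / (1 - al)).
  { apply Rle_mult_inv_pos. left; apply Rpow_pos. lra. }
  unfold Rdiv in *. lra.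
Qed.


Lemma FF_lim_inf al : 0 < al < 1 -> exists L1, (forall x, 1 <= x -> FF al x <= L1) /\
  forall eps, 0 < eps -> exists M, 1 <= M /\ forall x, M < x -> Rabs (FF al x - L1) < eps.
Proof.
  intros ha.
  set (E := fun y => exists x, 1 <= x /\ y = FF al x).
  assert (bE : bound E). { exists 1. intros y [x [hx ->]]. apply FF_up; auto. }
  assert (nE : exists y, E y). { exists (FF al 1). exists 1. split; [lra|auto]. }
  destruct (completeness E bE nE) as [L [hub hlub]].
  exists L. split.
  - intros x hx. apply hub. exists x; auto.
  - intros eps he.
    assert (ex : exists x, 1 <= x /\ L - eps < FF al x).
    { apply NNPP. intros hn. assert (is_upper_bound E (L - eps)).
      { intros y [x [hx ->]]. apply Rnot_lt_le. intros hl. apply hn. exists x. auto. }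
      specialize (hlub _ H). lra. }
    destruct ex as [x0 [hx0 hl]]. exists x0. split; auto. intros x hx.
    assert (FF al x0 <= FF al x) by (apply FF_incr; lra).
    assert (FF al x <= L) by (apply hub; exists x; split; [lra|auto]).
    apply Rabs_lt_between. lra.
Qed.

Lemma FF_lim_0 al : 0 < al < 1 -> exists L0, (forall x, 0 < x <= 1 -> L0 <= FF al x) /\
  forall eps, 0 < eps -> exists d, 0 < d <= 1 /\ forall x, 0 < x < d -> Rabs (FF al x - L0) < eps.
Proof.
  intros ha.
  set (E := fun y => exists x, 0 < x <= 1 /\ y = - FF al x).
  assert (bE : bound E). { exists (/ (1 - al)). intros y [x [hx ->]]. pose proof (FF_low al x ha hx). lra. }
  assert (nE : exists y, E y). { exists (- FF al 1). exists 1. split; [lra|auto]. }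
  destruct (completeness E bE nE) as [L [hub hlub]].
  exists (- L). split.
  - intros x hx. assert (- FF al x <= L) by (apply hub; exists x; auto). lra.
  - intros eps he.
    assert (ex : exists x, 0 < x <= 1 /\ L - eps < - FF al x).
    { apply NNPP. intros hn. assert (is_upper_bound E (L - eps)).
      { intros y [x [hx ->]]. apply Rnot_lt_le. intros hl. apply hn. exists x. auto. }
      specialize (hlub _ H). lra. }
    destruct ex as [x0 [hx0 hl]]. exists x0. split; auto. intros x hx.
    assert (FF al x <= FF al x0) by (apply FF_incr; lra).
    assert (- FF al x <= L) by (apply hub; exists x; split; [lra|auto]).
    apply Rabs_lt_between. lra.
Qed.

Lemma at_right_pos : at_right 0 (fun a => 0 < a).
Proof. exists (mkposreal 1 Rlt_0_1). intros y _ hy. exact hy. Qed.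

Lemma pinf_pos : Rbar_locally p_infty (fun b => 0 < b).
Proof. exists 0. intros; lra. Qed.

Lemma f1_gen al : 0 < al < 1 -> exists L, 0 < L /\
  is_RInt_gen (f1 al) (at_right 0) (Rbar_locally p_infty) L.
Proof.
  intros ha.
  destruct (FF_lim_inf al ha) as [L1 [hL1 lim1]].
  destruct (FF_lim_0 al ha) as [L0 [hL0 lim0]].
  exists (L1 - L0). split.
  - assert (FF al (1/2) < FF al 1).
    { assert (FF al (1/2) - exp (-1) * (1/2) <= FF al 1 - exp (-1) * 1); [|pose proof (exp_pos (-1)); lra].
      apply (mono_le (fun t => FF al t - exp (-1) * t) (fun t => f1 al t - exp (-1))). lra.
      - intros u hu. apply (@is_derive_minus R_AbsRing R_NormedModule). apply FF_der; lra.
        auto_derive; auto. ring.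
      - intros u hu. rewrite f1_pp. assert (1 <= pp al u) by (apply pp_ge1; lra).
        assert (exp (-1) <= exp (- u)) by (destruct (Req_dec u 1) as [e|ne]; [right; f_equal; lra| left; apply exp_increasing; lra]).
        pose proof (exp_pos (-1)). nra. }
    pose proof (hL1 1 ltac:(lra)). pose proof (hL0 (1/2) ltac:(lra)). lra.
  - intros P [eps hP]. unfold filtermapi.
    assert (he2 : 0 < eps / 2) by (destruct eps; simpl; lra).
    destruct (lim0 _ he2) as [d [hd hd']]. destruct (lim1 _ he2) as [M [hM hM']].
    apply Filter_prod with (fun a => 0 < a < d) (fun b => M < b).
    * exists (mkposreal d ltac:(lra)). intros y hy hpos. apply ballR' in hy. simpl in hy.
      rewrite Rminus_0_r in hy. apply Rabs_lt_between in hy. lra.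
    * exists M. auto.
    * intros a b ha' hb'. simpl. exists (FF al b - FF al a). split. apply FF_is; lra.
      apply hP. apply ballR. simpl.
      specialize (hd' a ha'). specialize (hM' b hb').
      apply Rabs_lt_between in hd'. apply Rabs_lt_between in hM'. apply Rabs_lt_between. lra.
Qed.

Definition Fg2 al t := Rpower t (1 - al) * exp (- t).
Definition dFg2 al t := (1 - al) * f1 al t - Fg2 al t.

Lemma F2_der al t : 0 < t -> is_derive (Fg2 al) t (dFg2 al t).
Proof. intros ht. unfold dFg2, Fg2, f1, Rpower. auto_derive. lra. field. lra. Qed.

Lemma dF2_cont al t : 0 < t -> continuous (dFg2 al) t.
Proof.
  intros ht. apply (@ex_derive_continuous R_AbsRing R_NormedModule).
  unfold dFg2, Fg2, f1, Rpower. auto_derive. repeat split; lra.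
Qed.

Lemma dF2_is al a b : 0 < a -> 0 < b -> is_RInt (dFg2 al) a b (Fg2 al b - Fg2 al a).
Proof.
  intros ha hb. assert (0 < Rmin a b) by (apply Rmin_glb_lt; auto).
  apply (is_RInt_derive (V:=R_CompleteNormedModule) (Fg2 al) (dFg2 al) a b).
  - intros x hx. apply F2_der. lra.
  - intros x hx. apply dF2_cont. lra.
Qed.

Lemma F2_pos al t : 0 < t -> 0 < Fg2 al t.
Proof. intros. unfold Fg2. apply Rmult_lt_0_compat. apply Rpow_pos. apply exp_pos. Qed.

Lemma exp_neg_le1 t : 0 <= t -> exp (- t) <= 1.
Proof. intros. rewrite <- exp_0. destruct (Req_dec t 0). subst. rewrite Ropp_0. lra.
  left. apply exp_increasing. lra. Qed.

Lemma F2_small0 al eps : 0 < al < 1 -> 0 < eps -> exists d, 0 < d /\ forall t, 0 < t < d -> Fg2 al t < eps.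
Proof.
  intros ha he. exists (Rpower eps (/ (1 - al))). split. apply Rpow_pos.
  intros t ht. unfold Fg2.
  assert (Rpower t (1 - al) < eps).
  { apply Rlt_le_trans with (Rpower (Rpower eps (/ (1 - al))) (1 - al)).
    apply Rlt_Rpower_l; lra.
    rewrite Rpower_mult. replace (/ (1 - al) * (1 - al)) with 1 by (field; lra). rewrite Rpower_1; lra. }
  pose proof (exp_neg_le1 t ltac:(lra)). pose proof (Rpow_pos t (1 - al)). pose proof (exp_pos (- t)). nra.
Qed.

Lemma F2_smallinf al eps : 0 < al < 1 -> 0 < eps -> exists M, 1 <= M /\ forall t, M < t -> Fg2 al t < eps.
Proof.
  intros ha he. exists (Rmax 1 (4 / eps)). split. apply Rmax_l.
  intros t ht. assert (h1 : 1 < t) by (pose proof (Rmax_l 1 (4/eps)); lra).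
  assert (h2 : 4 / eps < t) by (pose proof (Rmax_r 1 (4/eps)); lra).
  unfold Fg2.
  assert (hr : Rpower t (1 - al) <= t).
  { rewrite <- (Rpower_1 t) at 2 by lra. apply Rle_Rpower; lra. }
  assert (he2 : t * t / 4 < exp t).
  { replace t with (t/2 + t/2) at 3 by field. rewrite exp_plus.
    pose proof (exp_ineq1 (t/2) ltac:(lra)). nra. }
  assert (exp (- t) = / exp t) by (rewrite exp_Ropp; auto). rewrite H.
  pose proof (exp_pos t). pose proof (Rpow_pos t (1 - al)).
  apply Rle_lt_trans with (t * / exp t). apply Rmult_le_compat_r. left; apply Rinv_0_lt_compat; lra. auto.
  apply (proj2 (Rcomplements.Rlt_div_l t eps (exp t) H0)).
  apply Rlt_trans with (eps * (t * t / 4)).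
  - assert (4 < eps * t). { apply (Rmult_lt_compat_l eps) in h2; auto.
      replace (eps * (4 / eps)) with 4 in h2 by (field; lra). exact h2. }
    nra.
  - apply Rmult_lt_compat_l; auto.
Qed.

Lemma dF2_gen al : 0 < al < 1 -> is_RInt_gen (dFg2 al) (at_right 0) (Rbar_locally p_infty) 0.
Proof.
  intros ha P [eps hP]. unfold filtermapi.
  assert (he2 : 0 < eps / 2) by (destruct eps; simpl; lra).
  destruct (F2_small0 al _ ha he2) as [d [hd hd']]. destruct (F2_smallinf al _ ha he2) as [M [hM hM']].
  apply Filter_prod with (fun a => 0 < a < d) (fun b => M < b).
  - exists (mkposreal d ltac:(lra)). intros y hy hpos. apply ballR' in hy. simpl in hy.
    rewrite Rminus_0_r in hy. apply Rabs_lt_between in hy. lra.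
  - exists M. auto.
  - intros a b ha' hb'. simpl. exists (Fg2 al b - Fg2 al a). split. apply dF2_is; lra.
    apply hP. apply ballR. simpl.
    specialize (hd' a ha'). specialize (hM' b hb').
    pose proof (F2_pos al a ltac:(lra)). pose proof (F2_pos al b ltac:(lra)).
    apply Rabs_lt_between. lra.
Qed.

Lemma Rpower_m1 x e : 0 < x -> Rpower x (e - 1) = Rpower x e / x.
Proof. intros hx. unfold Rminus. rewrite Rpower_plus, Rpower_Ropp, Rpower_1 by auto. reflexivity. Qed.

Lemma prop_ar : ProperFilter' (at_right 0).
Proof. apply Proper_StrongProper, at_right_proper_filter. Qed.
Lemma prop_pi : ProperFilter' (Rbar_locally p_infty).
Proof. apply Proper_StrongProper, Rbar_locally_filter. Qed.

Lemma Gamma_facts al : 0 < al < 1 -> 0 < Gamma (1 - al) /\ Gamma (2 - al) = (1 - al) * Gamma (1 - al).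
Proof.
  intros ha. destruct (f1_gen al ha) as [L [hL hI]].
  assert (G1 : Gamma (1 - al) = L).
  { unfold Gamma. apply (is_RInt_gen_unique (V:=R_CompleteNormedModule) (Fa:=at_right 0) (Fb:=Rbar_locally p_infty)).

    apply (is_RInt_gen_ext (V:=R_NormedModule) (f1 al)); auto.
    apply Filter_prod with (fun a => 0 < a) (fun b => 0 < b). apply at_right_pos. apply pinf_pos.
    intros a b ha' hb' x hx. simpl in hx. assert (0 < Rmin a b) by (apply Rmin_glb_lt; auto).
    unfold f1. rewrite Rpower_m1 by lra. reflexivity. }
  split. lra.
  rewrite G1.
  unfold Gamma. apply (is_RInt_gen_unique (V:=R_CompleteNormedModule) (Fa:=at_right 0) (Fb:=Rbar_locally p_infty)).

  pose proof (is_RInt_gen_minus (V:=R_NormedModule) (Fa:=at_right 0) (Fb:=Rbar_locally p_infty)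
     (fun y => scal (1 - al) (f1 al y)) (dFg2 al) _ _
     (is_RInt_gen_scal (V:=R_NormedModule) (f1 al) (1 - al) L hI) (dF2_gen al ha)) as hm.
  replace ((1 - al) * L) with (minus (scal (1 - al) L) (zero : R)).
  apply (is_RInt_gen_ext (V:=R_NormedModule) (fun y => minus (scal (1 - al) (f1 al y)) (dFg2 al y))); auto.
  apply Filter_prod with (fun a => 0 < a) (fun b => 0 < b). apply at_right_pos. apply pinf_pos.
  intros a b ha' hb' x hx. simpl in hx. assert (0 < Rmin a b) by (apply Rmin_glb_lt; auto).
  unfold dFg2, Fg2. replace (2 - al - 1) with (1 - al) by ring.
  change (minus (scal (1 - al) (f1 al x)) ((1 - al) * f1 al x - Rpower x (1 - al) * exp (- x)))
    with ((1 - al) * f1 al x - ((1 - al) * f1 al x - Rpower x (1 - al) * exp (- x))). lra.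
  change (@eq R ((1 - al) * L - 0) ((1 - al) * L)). ring.
Qed.

Lemma Hh_lin sg (A B : nat -> R) i :
  Hh (fun m => sg * A m + (1 - sg) * B m) i = sg * Hh A i + (1 - sg) * Hh B i.
Proof. unfold Hh. field. Qed.

Lemma energy_step (N : nat) (l h tau C sg a d : R) (c : nat -> R) (j : nat)
  (Y : nat -> nat -> R) (ph : nat -> R) :
  (1 <= N)%nat -> 0 < l -> h = l / INR N -> 0 < tau -> 0 < C -> 0 < a -> 0 <= d ->
  1/2 <= sg <= 1 ->
  (forall k, (1 <= k)%nat -> (k < j)%nat -> c (S k) <= c k) -> 0 <= c j ->
  ((1 <= j)%nat -> (1 - sg)^2 * c 1%nat <= (c 0%nat - c 1%nat) * (2 * sg - 1)) ->
  Y j 0%nat = 0 -> Y j N = 0 -> Y (S j) 0%nat = 0 -> Y (S j) N = 0 ->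
  (forall i, (1 <= i <= N - 1)%nat ->
     C * rsum (S j) (fun s => c (j - s)%nat * ((Hh (Y (S s)) i - Hh (Y s) i) / tau)) =
     a * dxx h (fun m => sg * Y (S j) m + (1 - sg) * Y j m) i
     - d * Hh (fun m => sg * Y (S j) m + (1 - sg) * Y j m) i + Hh ph i) ->
  C / (2 * tau) * rsum (S j) (fun s => c (j - s)%nat *
      (norm0_sq N h (Hh (Y (S s))) - norm0_sq N h (Hh (Y s))))
  <= 3 * l ^ 2 / (16 * a) * norm0_sq N h (Hh ph).
Proof.
  intros hN hl hh htau hC ha hd hsg hmono hcj h01 b1 b2 b3 b4 heq.
  assert (hhp : 0 < h) by (rewrite hh; apply Rdiv_lt_0_compat; [lra| apply lt_0_INR; lia]).
  set (z := fun m => sg * Y (S j) m + (1 - sg) * Y j m).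
  set (lam := 4 / (3 * l ^ 2)).
  assert (hlam : 0 < lam) by (unfold lam; apply Rdiv_lt_0_compat; nra).
  assert (pt : forall i', (i' < N - 1)%nat ->
     C / (2 * tau) * rsum (S j) (fun s => c (j - s)%nat * (Hh (Y (S s)) (S i') * Hh (Y (S s)) (S i') - Hh (Y s) (S i') * Hh (Y s) (S i')))
     <= Hh z (S i') * (a * dxx h z (S i') - d * Hh z (S i') + Hh ph (S i'))).
  { intros i' hi'. set (i := S i').
    set (v := fun s => Hh (Y s) i).
    pose proof (alik c j sg v hsg hmono hcj h01) as hal.
    assert (hz : Hh z i = sg * v (S j) + (1 - sg) * v j) by (unfold z, v; apply Hh_lin).
    specialize (heq i ltac:(unfold i; lia)). fold z in heq.
    assert (e1 : rsum (S j) (fun s => c (j - s)%nat * ((Hh (Y (S s)) i - Hh (Y s) i) / tau))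
                = / tau * rsum (S j) (fun s => c (j - s)%nat * (v (S s) - v s))).
    { rewrite <- rsum_scal. apply rsum_ext. intros s _. unfold v. field. lra. }
    assert (e2 : rsum (S j) (fun s => c (j - s)%nat * (Hh (Y (S s)) i * Hh (Y (S s)) i - Hh (Y s) i * Hh (Y s) i))
                = rsum (S j) (fun s => c (j - s)%nat * (v (S s) ^ 2 - v s ^ 2))).
    { apply rsum_ext. intros s _. unfold v. ring. }
    rewrite e2. rewrite <- heq, e1, hz.
    assert (hCt : 0 < C / tau) by (apply Rdiv_lt_0_compat; lra).
    set (R1 := rsum (S j) (fun s => c (j - s)%nat * (v (S s) - v s))) in *.
    set (R2 := rsum (S j) (fun s => c (j - s)%nat * (v (S s) ^ 2 - v s ^ 2))) in *.
    set (Z := sg * v (S j) + (1 - sg) * v j) in *.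
    assert (e3 : C / (2 * tau) * R2 = C / tau * (1 / 2 * R2)) by (field; lra).
    assert (e4 : Z * (C * (/ tau * R1)) = C / tau * (Z * R1)) by (field; lra).
    rewrite e3, e4. apply Rmult_le_compat_l; lra. }
  assert (sm := rsum_le (N - 1) _ _ (fun i' hi' => Rmult_le_compat_r h _ _ (Rlt_le _ _ hhp) (pt i' hi'))).
  assert (eL : rsum (N - 1) (fun i' => C / (2 * tau) * rsum (S j) (fun s => c (j - s)%nat *
        (Hh (Y (S s)) (S i') * Hh (Y (S s)) (S i') - Hh (Y s) (S i') * Hh (Y s) (S i'))) * h)
      = C / (2 * tau) * rsum (S j) (fun s => c (j - s)%nat *
      (norm0_sq N h (Hh (Y (S s))) - norm0_sq N h (Hh (Y s))))).
  { transitivity (rsum (N - 1) (fun i' => C / (2 * tau) * rsum (S j) (fun s => c (j - s)%nat *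
        (Hh (Y (S s)) (S i') * Hh (Y (S s)) (S i') * h - Hh (Y s) (S i') * Hh (Y s) (S i') * h)))).
    { apply rsum_ext. intros i' _. rewrite Rmult_assoc, (Rmult_comm _ h), <- rsum_scal. f_equal. apply rsum_ext.
      intros s _. ring. }
    rewrite rsum_scal. f_equal. rewrite rsum_swap. apply rsum_ext. intros s _.
    rewrite rsum_scal. f_equal. unfold norm0_sq. rewrite <- rsum_minus. reflexivity. }
  rewrite eL in sm.
  set (Zs := rsum (N - 1) (fun i' => Hh z (S i') * Hh z (S i') * h)).
  set (Ph := norm0_sq N h (Hh ph)).
  assert (hZ : 0 <= Zs) by (apply rsum_nonneg; intros; apply Rmult_le_pos; nra).
  assert (hsp : lam * Zs <= rsum (N - 1) (fun i => - dxx h z (S i) * Hh z (S i) * h)).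
  { unfold lam, Zs. apply (space N h l z); auto. unfold z. rewrite b1, b3. ring. unfold z. rewrite b2, b4. ring. }
  assert (eR : rsum (N - 1) (fun i' => Hh z (S i') * (a * dxx h z (S i') - d * Hh z (S i') + Hh ph (S i')) * h)
     = - a * rsum (N - 1) (fun i => - dxx h z (S i) * Hh z (S i) * h) - d * Zs
       + rsum (N - 1) (fun i' => Hh z (S i') * Hh ph (S i') * h)).
  { unfold Zs. rewrite <- !rsum_scal, <- rsum_minus, <- rsum_plus. apply rsum_ext. intros; ring. }
  assert (young : rsum (N - 1) (fun i' => Hh z (S i') * Hh ph (S i') * h) <= a * lam * Zs + / (4 * (a * lam)) * Ph).
  { unfold Zs, Ph, norm0_sq. rewrite <- !rsum_scal, <- rsum_plus. apply rsum_le. intros i' _.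
    set (p := Hh z (S i')). set (r := Hh ph (S i')).
    assert (0 < a * lam) by nra.
    assert (p * r <= a * lam * (p * p) + / (4 * (a * lam)) * (r * r)).
    { assert (0 <= (2 * (a * lam) * p - r) * (2 * (a * lam) * p - r)) by apply Rle_0_sqr.
      assert (e : a * lam * (p * p) + / (4 * (a * lam)) * (r * r) - p * r
                = (2 * (a * lam) * p - r) * (2 * (a * lam) * p - r) / (4 * (a * lam))) by (field; lra).
      assert (0 <= (2 * (a * lam) * p - r) * (2 * (a * lam) * p - r) / (4 * (a * lam))).
      { apply Rle_mult_inv_pos; nra. }
      lra. }
    nra. }
  rewrite eR in sm.
  assert (ef : / (4 * (a * lam)) = 3 * l ^ 2 / (16 * a)) by (unfold lam; field; lra).
  assert (hPh : 0 <= Ph) by (unfold Ph, norm0_sq; apply rsum_nonneg; intros; apply Rmult_le_pos; nra).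
  rewrite <- ef. nra.
Qed.

Lemma cjj_pos al j : 0 < al < 1 -> 0 < c_coef al (1 - al/2) j j.
Proof.
  intros ha. eapply Rlt_le_trans; [|apply F1; auto].
  apply Rmult_lt_0_compat. lra. apply pp_pos. pose proof (pos_INR j). lra.
Qed.

Lemma clast_le al j : 0 < al < 1 -> forall d k, (1 <= k)%nat -> (k + d = j)%nat ->
  c_coef al (1 - al/2) j j <= c_coef al (1 - al/2) j k.
Proof.
  intros ha d. induction d; intros k hk hkd.
  - replace k with j by lia. lra.
  - apply (Rle_trans _ (c_coef al (1 - al/2) j (S k)) _). apply IHd; lia.
    apply F2; auto; lia.
Qed.

Lemma cmono al j k : 0 < al < 1 -> (k < j)%nat ->
  c_coef al (1 - al/2) j (S k) <= c_coef al (1 - al/2) j k.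
Proof.
  intros ha hk. destruct k as [|k'].
  - pose proof (F3 al j ha ltac:(lia)) as h3. simpl in h3.
    assert (0 < c_coef al (1 - al/2) j 1).
    { eapply Rlt_le_trans. apply (cjj_pos al j ha). apply (clast_le al j ha (j - 1)); lia. }
    assert (0 <= (al/2)^2 * c_coef al (1 - al/2) j 1) by (apply Rmult_le_pos; [apply pow2_ge_0| lra]).
    replace (2 * (1 - al/2) - 1) with (1 - al) in h3 by field.
    assert (0 <= c_coef al (1 - al / 2) j 0 - c_coef al (1 - al / 2) j 1).
    { apply Rmult_le_reg_r with (1 - al). lra. rewrite Rmult_0_l. lra. }
    lra.
  - apply F2; auto; lia.
Qed.

Lemma c0_pos al j : 0 < al < 1 -> 0 < c_coef al (1 - al/2) j 0.
Proof.
  intros ha. destruct j as [|j'].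
  - apply cjj_pos; auto.
  - eapply Rlt_le_trans. apply (cjj_pos al (S j') ha).
    apply (Rle_trans _ (c_coef al (1 - al/2) (S j') 1) _).
    apply (clast_le al (S j') ha j'); lia. apply cmono; auto; lia.
Qed.

Lemma rmax_ge n g m : (m <= n)%nat -> g m <= rmax_upto n g.
Proof.
  induction n; intros hm. replace m with 0%nat by lia. simpl. lra.
  simpl. destruct (Nat.eq_dec m (S n)). subst. apply Rmax_r.
  apply (Rle_trans _ (rmax_upto n g) _). apply IHn; lia. apply Rmax_l.
Qed.

Theorem theorem4
  (alpha l T c1 : R) (N M : nat)
  (k q : R -> R) (f : R -> R -> R) (u0 : R -> R) (y : nat -> nat -> R) :
  0 < alpha < 1 -> 0 < l -> 0 < T -> (1 <= N)%nat -> (1 <= M)%nat -> 0 < c1 ->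
  (forall t, 0 <= t <= T -> c1 <= k t) ->
  (forall t, 0 <= t <= T -> 0 <= q t) ->
  (forall t, 0 <= t <= T ->
     filterlim k (within (fun s => 0 <= s <= T) (locally t)) (locally (k t))) ->
  (forall t, 0 <= t <= T ->
     filterlim q (within (fun s => 0 <= s <= T) (locally t)) (locally (q t))) ->
  (forall x t, 0 <= x <= l -> 0 <= t <= T ->
     filterlim (fun p : R * R => f (fst p) (snd p))
       (within (fun p : R * R => 0 <= fst p <= l /\ 0 <= snd p <= T) (locally (x, t)))
       (locally (f x t))) ->
  let sigma := 1 - alpha / 2 in
  let h := l / INR N in
  let tau := T / INR M in
  let x := fun i : nat => INR i * h in
  let tsig := fun j : nat => (INR j + sigma) * tau in
  (* phi^{j+1}_i = f(x_i, t_{j+sigma}), i.e. phi^j_i = f(x_i, t_{j-1+sigma}) for j >= 1 *)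
  let phi := fun (j i : nat) => f (x i) (tsig (Nat.pred j)) in
  (forall j i, (j < M)%nat -> (1 <= i <= N - 1)%nat ->
     frac_diff alpha sigma tau (fun s => Hh (y s) i) j =
       k (tsig j) * dxx h (fun m => sigma * y (S j) m + (1 - sigma) * y j m) i
       - q (tsig j) * Hh (fun m => sigma * y (S j) m + (1 - sigma) * y j m) i
       + Hh (phi (S j)) i) ->
  (forall j, (j <= M)%nat -> y j 0%nat = 0 /\ y j N = 0) ->
  (forall i, (1 <= i <= N - 1)%nat -> y 0%nat i = u0 (x i)) ->
  forall j, (j < M)%nat ->
    norm0_sq N h (Hh (y (S j))) <=
      norm0_sq N h (Hh (y 0%nat))
      + l ^ 2 * Rpower T alpha * Gamma (1 - alpha) / c1
        * rmax_upto (M - 1) (fun m => norm0_sq N h (Hh (phi (S m)))).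
Proof.
  intros hal hl hT hN hM hc1 hk hq _ _ _ sigma h tau x tsig phi heq hbd hinit j hj.
  destruct (Gamma_facts alpha hal) as [hG1 hG2].
  assert (hMp : 0 < INR M) by (apply lt_0_INR; lia).
  assert (htau : 0 < tau) by (unfold tau; apply Rdiv_lt_0_compat; lra).
  assert (hNp : 0 < INR N) by (apply lt_0_INR; lia).
  assert (hh : 0 < h) by (unfold h; apply Rdiv_lt_0_compat; lra).
  set (G := rmax_upto (M - 1) (fun m => norm0_sq N h (Hh (phi (S m))))).
  assert (hnn : forall v, 0 <= norm0_sq N h v).
  { intros v. unfold norm0_sq. apply rsum_nonneg. intros. apply Rmult_le_pos; [apply Rle_0_sqr | lra]. }
  assert (hGm : forall m, (m <= M - 1)%nat -> norm0_sq N h (Hh (phi (S m))) <= G).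
  { intros m hm. unfold G. apply (rmax_ge (M - 1) (fun m => norm0_sq N h (Hh (phi (S m))))). auto. }
  assert (hG0 : 0 <= G) by (eapply Rle_trans; [apply (hnn (Hh (phi 1%nat)))| apply (hGm 0%nat); lia]).
  apply (gron (fun j k => c_coef alpha sigma j k) (fun s => norm0_sq N h (Hh (y s))) _ M); auto.
  - intros j0 k0 hk0. apply cmono; auto.
  - intros j0. apply c0_pos; auto.
  - intros j0 hj0.
    set (C := Rpower tau (1 - alpha) / Gamma (2 - alpha)).
    assert (hC : 0 < C) by (unfold C; apply Rdiv_lt_0_compat; [apply Rpow_pos| nra]).
    assert (hts : 0 <= tsig j0 <= T).
    { unfold tsig, sigma, tau. assert (INR j0 + 1 <= INR M) by (rewrite <- S_INR; apply le_INR; lia).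
      pose proof (pos_INR j0). split. apply Rmult_le_pos. lra. left; apply Rdiv_lt_0_compat; lra.
      apply (Rle_trans _ (INR M * (T / INR M)) _). apply Rmult_le_compat_r. left; apply Rdiv_lt_0_compat; lra. lra.
      right. field. lra. }
    set (a := k (tsig j0)). set (d := q (tsig j0)).
    assert (ha : c1 <= a) by (apply hk; auto).
    assert (hd : 0 <= d) by (apply hq; auto).
    destruct (hbd j0 ltac:(lia)) as [b1 b2]. destruct (hbd (S j0) ltac:(lia)) as [b3 b4].
    pose proof (energy_step N l h tau C sigma a d (c_coef alpha sigma j0) j0 y (phi (S j0))
      hN hl eq_refl htau hC ltac:(lra) hd ltac:(unfold sigma; lra)) as es.
    assert (Hmono : forall k0, (1 <= k0)%nat -> (k0 < j0)%nat -> c_coef alpha sigma j0 (S k0) <= c_coef alpha sigma j0 k0).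
    { intros; apply cmono; auto. }
    assert (Hcj : 0 <= c_coef alpha sigma j0 j0) by (left; apply cjj_pos; auto).
    assert (H01 : (1 <= j0)%nat -> (1 - sigma) ^ 2 * c_coef alpha sigma j0 1 <= (c_coef alpha sigma j0 0 - c_coef alpha sigma j0 1) * (2 * sigma - 1)).
    { intros hj1. pose proof (F3 alpha j0 hal hj1) as h3. simpl in h3. unfold sigma.
      replace (1 - (1 - alpha / 2)) with (alpha / 2) by field. exact h3. }
    specialize (es Hmono Hcj H01 b1 b2 b3 b4).
    assert (Heq : forall i, (1 <= i <= N - 1)%nat ->
       C * rsum (S j0) (fun s => c_coef alpha sigma j0 (j0 - s)%nat * ((Hh (y (S s)) i - Hh (y s) i) / tau)) =
       a * dxx h (fun m => sigma * y (S j0) m + (1 - sigma) * y j0 m) i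
       - d * Hh (fun m => sigma * y (S j0) m + (1 - sigma) * y j0 m) i + Hh (phi (S j0)) i).
    { intros i hi. exact (heq j0 i hj0 hi). }
    specialize (es Heq).
    set (S0 := rsum (S j0) (fun s => c_coef alpha sigma j0 (j0 - s)%nat *
         (norm0_sq N h (Hh (y (S s))) - norm0_sq N h (Hh (y s))))) in *.
    change (rsum (S j0) (fun s => c_coef alpha sigma j0 (j0 - s)%nat *
         ((fun s => norm0_sq N h (Hh (y s))) (S s) - (fun s => norm0_sq N h (Hh (y s))) s))) with S0.
    set (Ph := norm0_sq N h (Hh (phi (S j0)))) in *.
    assert (hPh : Ph <= G) by (apply hGm; lia).
    assert (hPh0 : 0 <= Ph) by apply hnn.
    set (Ta := Rpower tau alpha). set (Ma := Rpower (INR M) alpha).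
    assert (hTa : 0 < Ta) by apply Rpow_pos. assert (hMa : 0 < Ma) by apply Rpow_pos.
    assert (eT : Rpower T alpha = Ta * Ma).
    { unfold Ta, Ma. rewrite Rpower_mult_distr by lra. f_equal. unfold tau. field. lra. }
    assert (eC : C = tau / Ta / Gamma (2 - alpha)).
    { unfold C, Ta. f_equal. replace (1 - alpha) with (1 + - alpha) by ring.
      rewrite Rpower_plus, Rpower_Ropp, Rpower_1 by lra. reflexivity. }
    assert (hc : (1 - alpha) / Ma <= c_coef alpha sigma j0 j0).
    { eapply Rle_trans; [|apply F1; auto]. unfold Ma, Rdiv. rewrite <- pp_eq by lra.
      apply Rmult_le_compat_l. lra. apply pp_dec. lra.
      assert (INR j0 + 1 <= INR M) by (rewrite <- S_INR; apply le_INR; lia). pose proof (pos_INR j0). lra. }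
    set (g1 := Gamma (1 - alpha)) in *.
    set (c := c_coef alpha sigma j0 j0) in *.
    set (P := l ^ 2 * Rpower T alpha * g1 / c1 * G).
    assert (hP : 0 <= P).
    { unfold P. rewrite eT. apply Rmult_le_pos; [|auto]. apply Rle_mult_inv_pos; [|lra].
      apply Rmult_le_pos; [|lra]. apply Rmult_le_pos; [nra| nra]. }
    rewrite eC, hG2 in es.
    assert (hS : S0 <= 2 * Ta * ((1 - alpha) * g1) * (3 * l ^ 2 / (16 * a) * Ph)).
    { assert (e : tau / Ta / ((1 - alpha) * g1) / (2 * tau) = / (2 * Ta * ((1 - alpha) * g1))) by (field; repeat split; nra).
      rewrite e in es. 
      assert (0 < (1 - alpha) * g1) by (apply Rmult_lt_0_compat; lra). assert (0 < 2 * Ta * ((1 - alpha) * g1)) by (apply Rmult_lt_0_compat; [lra|auto]).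
      apply (Rmult_le_reg_l (/ (2 * Ta * ((1 - alpha) * g1)))). apply Rinv_0_lt_compat; auto.
      replace (/ (2 * Ta * ((1 - alpha) * g1)) * (2 * Ta * ((1 - alpha) * g1) * (3 * l ^ 2 / (16 * a) * Ph))) with (3 * l ^ 2 / (16 * a) * Ph) by (field; lra). exact es. }
    assert (h2 : 3 * l ^ 2 / (16 * a) * Ph <= 3 * l ^ 2 / (16 * c1) * G).
    { apply Rmult_le_compat; try lra. apply Rle_mult_inv_pos; nra.
      unfold Rdiv. apply Rmult_le_compat_l. nra. apply Rinv_le_contravar; nra. }
    apply (Rle_trans _ _ _ hS).
    apply (Rle_trans _ (2 * Ta * ((1 - alpha) * g1) * (3 * l ^ 2 / (16 * c1) * G)) _).
    apply Rmult_le_compat_l. left. apply Rmult_lt_0_compat; [lra|]. apply Rmult_lt_0_compat; lra. exact h2.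
    apply (Rle_trans _ ((1 - alpha) / Ma * P) _).
    + unfold P. rewrite eT.
      assert (e : (1 - alpha) / Ma * (l ^ 2 * (Ta * Ma) * g1 / c1 * G) - 2 * Ta * ((1 - alpha) * g1) * (3 * l ^ 2 / (16 * c1) * G)
               = 5 / 8 * ((1 - alpha) * Ta * g1 * l ^ 2 * G / c1)) by (field; lra).
      assert (0 <= 5 / 8 * ((1 - alpha) * Ta * g1 * l ^ 2 * G / c1)).
      { apply Rmult_le_pos. lra. apply Rle_mult_inv_pos; [|lra].
        apply Rmult_le_pos; [|auto]. apply Rmult_le_pos; [|nra]. apply Rmult_le_pos; nra. }
      lra.
    + apply Rmult_le_compat_r; auto.
Qed.
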